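(* Let $X,Y$ be presheaves of sets on $\mathscr{V}_f$ such that $X$ takes values in finite sets and $Y$ is finite. Then the set of natural transformations $\mathrm{Hom}(X,Y)$ is finite.
   Context: $p$ prime, $\mathbb{F}=\mathbb{F}_p$, $\mathscr{V}_f$ finite-dimensional $\mathbb{F}$-vector spaces; presheaves are contravariant functors $\mathscr{V}_f\to$ Sets. A presheaf $Y$ is finite if there is a monomorphism $Y\hookrightarrow F_Y$ of presheaves of sets with $F_Y$ a functor $\mathscr{V}_f^{\mathrm{op}}\to$ ($\mathbb{F}$-vector spaces) having a finite composition series. *)

(* Defs.v *)
From mathcomp Require Import all_boot all_algebra.
Set Implicit Arguments. Unset Strict Implicit. Unset Printing Implicit Defensive.
Import GRing.Theory.
Local Open Scope ring_scope.

(* The category V_f of finite-dimensional F_p-vector spaces is modelled by its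
   skeleton: objects are n : nat (standing for F_p^n, row vectors), morphisms
   F_p^n -> F_p^m are matrices A : 'M_(n,m) (acting by v |-> v *m A), and the
   composite of A : n -> m followed by B : m -> k is A *m B. *)

Definition finite_type (T : Type) : Prop :=
  exists (N : nat) (f : 'I_N -> T), forall x, exists i, f i = x.

Section Presheaves.

Variable p : nat.
Local Notation F := 'F_p.

Record presheaf := Presheaf {
  ps_obj :> nat -> Type;
  ps_map : forall n m : nat, 'M[F]_(n, m) -> ps_obj m -> ps_obj n;
  ps_id : forall n (x : ps_obj n), ps_map 1%:M x = x;
  ps_comp : forall n m k (A : 'M[F]_(n, m)) (B : 'M[F]_(m, k)) (x : ps_obj k),
      ps_map (A *m B) x = ps_map A (ps_map B x)
}.
Arguments ps_map _ {n m}.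

Definition is_nat_trans {X Y : presheaf} (eta : forall n, X n -> Y n) : Prop :=
  forall n m (A : 'M[F]_(n, m)) (x : X m),
    eta n (ps_map X A x) = ps_map Y A (eta m x).

Definition finite_Hom (X Y : presheaf) : Prop :=
  exists (N : nat) (f : 'I_N -> forall n, X n -> Y n),
    forall eta : forall n, X n -> Y n, is_nat_trans eta ->
      exists i, forall n (x : X n), eta n x = f i n x.

Record vpresheaf := VPresheaf {
  vp_obj : nat -> lmodType F;
  vp_map : forall n m : nat, 'M[F]_(n, m) -> {linear vp_obj m -> vp_obj n};
  vp_id : forall n (v : vp_obj n), vp_map 1%:M v = v;
  vp_comp : forall n m k (A : 'M[F]_(n, m)) (B : 'M[F]_(m, k)) (v : vp_obj k),
      vp_map (A *m B) v = vp_map A (vp_map B v)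
}.
Arguments vp_map _ {n m}.

Definition is_subfunctor (G : vpresheaf) (S : forall n, vp_obj G n -> Prop) : Prop :=
  (forall n, S n 0) /\
  (forall n (u v : vp_obj G n), S n u -> S n v -> S n (u + v)) /\
  (forall n (a : F) (v : vp_obj G n), S n v -> S n (a *: v)) /\
  (forall n m (A : 'M[F]_(n, m)) (v : vp_obj G m), S m v -> S n (vp_map G A v)).

Definition sub_incl (G : vpresheaf) (S T : forall n, vp_obj G n -> Prop) : Prop :=
  forall n v, S n v -> T n v.

Definition sub_strict (G : vpresheaf) (S T : forall n, vp_obj G n -> Prop) : Prop :=
  sub_incl S T /\ exists n v, T n v /\ ~ S n v.

(* finite composition series 0 = S_0 < S_1 < ... < S_k = G, each factor
   S_(i+1)/S_i simple, i.e. there is no subfunctor strictly between S_i and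
   S_(i+1) (correspondence theorem) *)
Definition has_finite_composition_series (G : vpresheaf) : Prop :=
  exists (k : nat) (S : nat -> forall n, vp_obj G n -> Prop),
    (forall i, is_subfunctor (S i)) /\
    (forall n v, S 0%N n v <-> v = 0) /\
    (forall n v, S k n v) /\
    (forall i, (i < k)%N ->
       sub_strict (S i) (S i.+1) /\
       ~ (exists T, is_subfunctor T /\ sub_strict (S i) T /\ sub_strict T (S i.+1))).

Definition finite_presheaf (Y : presheaf) : Prop :=
  exists (G : vpresheaf) (iota : forall n, Y n -> vp_obj G n),
    (forall n m (A : 'M[F]_(n, m)) (y : Y m),
        iota n (ps_map Y A y) = vp_map G A (iota m y)) /\
    (forall n, injective (iota n)) /\
    has_finite_composition_series G.

End Presheaves.

(* Main.v *)
Require Import Defs.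
From mathcomp Require Import all_boot all_algebra.
From Stdlib Require Import ClassicalEpsilon Eqdep_dec.
Set Implicit Arguments. Unset Strict Implicit. Unset Printing Implicit Defensive.
Import GRing.Theory.

Lemma fin_of_finType (T : finType) (U : Type) (g : T -> U) :
  (forall u, exists t, g t = u) -> finite_type U.
Proof.
move=> gs; exists #|T|, (fun i => g (enum_val i)) => u.
have [t <-] := gs u; exists (enum_rank t); by rewrite enum_rankK.
Qed.

Lemma fin_inj (A B : Type) (i : A -> B) : (forall x y, i x = i y -> x = y) ->
  finite_type B -> finite_type A.
Proof.
move=> inj [N [g gs]].
case: (classic (exists a : A, True)) => [[a0 _]|nA]; last first.
  exists 0%N, (fun k : 'I_0 => False_rect _ ltac:(by case: k)) => a; exfalso; apply: nA; by exists a.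
pose h (k : 'I_N) : A := match excluded_middle_informative (exists a, i a = g k) with
  | left e => proj1_sig (constructive_indefinite_description _ e) | right _ => a0 end.
exists N, h => a; have [k gk] := gs (i a); exists k; rewrite /h.
case: excluded_middle_informative => [e|ne]; last by exfalso; apply: ne; exists a.
case: constructive_indefinite_description => /= a' ia'; apply: inj; by rewrite ia'.
Qed.

Lemma fin_sig (d : nat) (Z : 'I_d -> Type) : (forall j, finite_type (Z j)) ->
  finite_type {j : 'I_d & Z j}.
Proof.
move=> fz.
have fz' : forall j, {N : nat & {g : 'I_N -> Z j | forall x, exists i, g i = x}}.
  move=> j; have [N e] := constructive_indefinite_description _ (fz j).
  exists N; exact: constructive_indefinite_description _ e.
apply: (@fin_of_finType {j : 'I_d & 'I_(projT1 (fz' j))} _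
   (fun t => existT _ (projT1 t) (proj1_sig (projT2 (fz' (projT1 t))) (projT2 t)))).
move=> [j x]; have [i gi] := proj2_sig (projT2 (fz' j)) x.
by exists (existT _ j i); rewrite /= gi.
Qed.

Lemma fin_from (T : Type) (P : T -> Prop) (R : T -> T -> Prop) (A B : Type)
  (ev : T -> A -> B) : finite_type A -> finite_type B ->
  (forall t t', P t -> P t' -> (forall a, ev t a = ev t' a) -> R t t') ->
  exists N (f : 'I_N -> T), forall t, P t -> exists i, R t (f i).
Proof.
move=> [NA [gA gAs]] [NB [gB gBs]] det.
case: (classic (exists t, P t)) => [[t0 Pt0]|nP]; last first.
  exists 0%N, (fun k : 'I_0 => False_rect _ ltac:(by case: k)) => t Pt; exfalso; apply: nP; by exists t.
pose C := {ffun 'I_NA -> 'I_NB}.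
pose good (c : C) (t : T) := P t /\ forall i, ev t (gA i) = gB (c i).
pose dec (c : C) : T := match excluded_middle_informative (exists t, good c t) with
  | left e => proj1_sig (constructive_indefinite_description _ e) | right _ => t0 end.
exists #|C|, (fun k => dec (enum_val k)) => t Pt.
have invB : forall b, {i | gB i = b}.
  by move=> b; apply: constructive_indefinite_description; apply: gBs.
pose c : C := [ffun i => proj1_sig (invB (ev t (gA i)))].
have gc : good c t by split=> // i; rewrite ffunE; case: (invB _).
exists (enum_rank c); rewrite enum_rankK /dec.
case: excluded_middle_informative => [e|ne]; last by exfalso; apply: ne; exists t.
case: constructive_indefinite_description => /= t' [Pt' et'].
apply: det => // a; have [i <-] := gAs a.
rewrite et'; case: gc => _ ->; done.
Qed.
Local Open Scope ring_scope.

Section Main.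
Variable p : nat.
Variable G : vpresheaf p.
Local Notation V := (vp_obj G).
Local Notation Gm := (vp_map G).

Definition spanned (n : nat) (S : V n -> Prop) :=
  exists (I : finType) (w : I -> V n), forall u, S u ->
    exists c : I -> 'F_p, u = \sum_i c i *: w i.

Lemma gen_sub (S : forall n, V n -> Prop) m (v : V m) :
  is_subfunctor S ->
  is_subfunctor (fun n u => exists s (c : 'M['F_p]_(n, m) -> 'F_p),
     S n s /\ u = s + \sum_A c A *: Gm A v).
Proof.
move=> [S0 [SD [SZ SM]]]; split; [|split; [|split]].
- move=> n; exists 0, (fun _ => 0); split=> //.
  by rewrite add0r big1 // => A _; rewrite scale0r.
- move=> n u1 u2 [s1 [c1 [Hs1 ->]]] [s2 [c2 [Hs2 ->]]].
  exists (s1 + s2), (fun A => c1 A + c2 A); split; first exact: SD.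
  have E : forall A : 'M['F_p]_(n,m), (c1 A + c2 A) *: Gm A v = c1 A *: Gm A v + c2 A *: Gm A v.
    move=> A; exact: scalerDl.
  by rewrite (eq_bigr _ (fun A _ => E A)) big_split /= addrACA.
- move=> n a u [s [c [Hs ->]]]; exists (a *: s), (fun A => a * c A); split; first exact: SZ.
  rewrite scalerDr scaler_sumr; congr (_ + _); apply: eq_bigr => A _; by rewrite scalerA.
- move=> n n' B u [s [c [Hs ->]]].
  exists (Gm B s), (fun A' => \sum_(A | B *m A == A') c A); split; first exact: SM.
  rewrite linearD linear_sum /=; congr (_ + _).
  rewrite (partition_big (fun A => B *m A) predT) //; apply: eq_bigr => A' _.
  rewrite scaler_suml; apply: eq_bigr => A /eqP <-.
  by rewrite linearZ /= vp_comp.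
Qed.

Unset Implicit Arguments.
Variables (k : nat) (S : nat -> forall n, V n -> Prop).
Hypothesis HS : forall i, is_subfunctor (S i).
Hypothesis Hk : forall n v, S k n v.
Hypothesis H0 : forall n v, S 0%N n v <-> v = 0.
Hypothesis Hst : forall i, (i < k)%N ->
       sub_strict (S i) (S i.+1) /\
       ~ (exists T, is_subfunctor T /\ sub_strict (S i) T /\ sub_strict T (S i.+1)).

Lemma simple_fill i (T : forall n, V n -> Prop) : (i < k)%N -> is_subfunctor T ->
  sub_strict (S i) T -> sub_incl T (S i.+1) -> forall n v, S i.+1 n v -> T n v.
Proof.
move=> ik HT st inc n v Sv; apply: NNPP => nT.
have [_ H] := Hst _ ik; apply: H; exists T; split=> //; split=> //.
by split=> //; exists n, v.
Qed.

Lemma sum_in (T : forall n, V n -> Prop) n m (v : V m) (c : 'M['F_p]_(n, m) -> 'F_p) :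
  is_subfunctor T -> T m v -> T n (\sum_A c A *: Gm A v).
Proof.
move=> [T0 [TD [TZ TM]]] Tv; apply: (big_ind (T n)); first exact: T0.
  by move=> x y; apply: TD.
move=> A _; apply: TZ; exact: TM.
Qed.

Lemma span_all i : (i <= k)%N -> forall n, spanned (S i n).
Proof.
elim: i => [_ n|i IH ik n].
  exists void, (fun x : void => match x with end) => u /H0 ->.
  by exists (fun x : void => match x with end); rewrite big1 // => [[]].
have ik' : (i < k)%N by [].
have [[inc [m [v [Sv nSv]]]] _] := Hst _ ik'.
pose T := (fun n u => exists s (c : 'M['F_p]_(n, m) -> 'F_p),
     S i n s /\ u = s + \sum_A c A *: Gm A v).
have HT : is_subfunctor T by apply: gen_sub.
have [S0 [SD [SZ SM]]] := HS i.+1.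
have fill := @simple_fill i T ik' HT.
have [I [w Hw]] := IH (ltnW ik) n.
exists (I + 'M['F_p]_(n, m))%type, (fun x => match x with inl a => w a | inr A => Gm A v end).
move=> u Su.
have Tu : T n u.
  apply: fill Su.
  - split.
      move=> n' u' Su'; exists u', (fun _ => 0); split=> //.
      by rewrite big1 ?addr0 // => A _; rewrite scale0r.
    exists m, v; split; last by [].
    exists 0, (fun A => if A == 1%:M then 1 else 0); split; first by have [] := HS i.
    rewrite add0r (bigD1 1%:M) //= eqxx scale1r vp_id big1 ?addr0 // => A /negPf ->.
    by rewrite scale0r.
  - move=> n' u' [s [c [Ss ->]]]; apply: SD; first exact: inc.
    exact: sum_in.
have [s [c [Ss ->]]] := Tu.
have [c' ->] := Hw _ Ss.
exists (fun x => match x with inl a => c' a | inr A => c A end).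
by rewrite big_sumType.
Qed.


Lemma bound_d : exists d, forall i, (i < k)%N ->
  exists n (v : V n), (n <= d)%N /\ S i.+1 n v /\ ~ S i n v.
Proof.
suff H : forall j, (j <= k)%N -> exists d, forall i, (i < j)%N ->
  exists n (v : V n), (n <= d)%N /\ S i.+1 n v /\ ~ S i n v by exact: H.
elim=> [_|j IH jk]; first by exists 0%N.
have [d Hd] := IH (ltnW jk).
have [[_ [n [v [Sv nSv]]]] _] := Hst _ jk.
exists (maxn d n) => i; rewrite ltnS leq_eqVlt => /orP [/eqP ->|ij].
  by exists n, v; rewrite leq_maxr.
have [n' [v' [? ?]]] := Hd _ ij; exists n', v'; split=> //.
by rewrite leq_max; apply/orP; left.
Qed.

Definition Kd d n (y : V n) := forall j (A : 'M['F_p]_(j, n)), (j <= d)%N -> Gm A y = 0.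

Lemma K_sub d : is_subfunctor (Kd d).
Proof.
split; [|split; [|split]].
- by move=> n j A _; rewrite linear0.
- by move=> n u v Ku Kv j A jd; rewrite linearD /= Ku // Kv // addr0.
- by move=> n a v Kv j A jd; rewrite linearZ /= Kv // scaler0.
- by move=> n m B v Kv j A jd; rewrite -vp_comp Kv.
Qed.

Lemma K_zero d : (forall i, (i < k)%N ->
  exists n (v : V n), (n <= d)%N /\ S i.+1 n v /\ ~ S i n v) ->
  forall n y, Kd d n y -> y = 0.
Proof.
move=> Hd.
suff H : forall i, (i <= k)%N -> forall n y, Kd d n y -> S i n y -> y = 0.
  move=> n y Ky; apply: (H k) => //; exact: Hk.
elim=> [_ n y _ /H0 //|i IH ik n y Ky Sy].
have ik' : (i < k)%N by [].
apply: NNPP => ny.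
pose T := (fun n u => exists s t, S i n s /\ Kd d n t /\ S i.+1 n t /\ u = s + t).
have [S0 [SD [SZ SM]]] := HS i.
have [S0' [SD' [SZ' SM']]] := HS i.+1.
have [K0 [KD [KZ KM]]] := K_sub d.
have HT : is_subfunctor T.
  split; [|split; [|split]].
  - by move=> n'; exists 0, 0; rewrite addr0.
  - move=> n' u v [s [t [? [? [? ->]]]]] [s' [t' [? [? [? ->]]]]].
    exists (s + s'), (t + t'); do !split; auto; by rewrite addrACA.
  - move=> n' a v [s [t [? [? [? ->]]]]].
    exists (a *: s), (a *: t); do !split; auto; by rewrite scalerDr.
  - move=> n' m B v [s [t [? [? [? ->]]]]].
    exists (Gm B s), (Gm B t); do !split; auto; by rewrite linearD.
have [[inc _] _] := Hst _ ik'.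
have fill := @simple_fill i T ik' HT.
have [n0 [v0 [n0d [Sv0 nSv0]]]] := Hd _ ik'.
have : T n0 v0.
  apply: fill Sv0.
  - split.
      by move=> n' u' Su'; exists u', 0; do !split; auto; rewrite addr0.
    exists n, y; split; first by exists 0, y; do !split; auto; rewrite add0r.
    by move=> Siy; apply: ny; exact: (IH (ltnW ik)).
  - by move=> n' u' [s [t [? [? [? ->]]]]]; apply: SD'; auto.
move=> [s [t [Ss [Kt [_ E]]]]].
have t0 : t = 0 by rewrite -(vp_id t); apply: Kt.
by apply: nSv0; rewrite E t0 addr0.
Qed.

End Main.

Theorem corollary3p9 (p : nat) (hp : prime p) (X Y : presheaf p) :
  (forall n, finite_type (X n)) -> finite_presheaf Y -> finite_Hom X Y.
Proof.
move=> fX [G [iota [nat_iota [inj [k [S [HS [H0 [Hk Hst]]]]]]]]].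
have fG : forall n, finite_type (vp_obj G n).
  move=> n; have [I [w Hw]] := @span_all p G k S HS H0 Hst k (leqnn k) n.
  apply: (@fin_of_finType {ffun I -> 'F_p} _ (fun c => \sum_i c i *: w i)) => u.
  have [c ->] := Hw u (Hk n u); exists (finfun c).
  by apply: eq_bigr => i _; rewrite ffunE.
have fY : forall n, finite_type (Y n) by move=> n; apply: fin_inj (inj n) (fG n).
have [d Hd] := @bound_d p G k S Hst.
have Kz := @K_zero p G k S HS Hk H0 Hst d Hd.
have := @fin_from (forall n, X n -> Y n) (@is_nat_trans p X Y)
  (fun eta eta' => forall n x, eta n x = eta' n x)
  {j : 'I_d.+1 & X j} {j : 'I_d.+1 & Y j}
  (fun eta a => existT _ (projT1 a) (eta _ (projT2 a)))
  (fin_sig (fun j => fX j)) (fin_sig (fun j => fY j)).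
case.
  move=> eta eta' Ne Ne' E n x.
  have agree : forall j (x : X j), (j <= d)%N -> eta j x = eta' j x.
    move=> j x' jd; have := E (existT _ (Ordinal (jd : (j < d.+1)%N)) x') => /=.
    move/(Eqdep_dec.inj_pair2_eq_dec _ (@eq_comparable _) (fun j : 'I_d.+1 => Y j)); done.
  apply: inj; apply/eqP; rewrite -subr_eq0; apply/eqP; apply: (Kz n).
  move=> j A jd; rewrite linearB /= -!nat_iota -Ne -Ne' agree // subrr //.
move=> N [f Hf]; exists N, f; exact: Hf.
Qed.
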